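(* Let $S$ be a semigroup. Every proper interior ideal of $S$ is minimal if and only if any two distinct proper interior ideals of $S$ have empty intersection.
   Context: A subsemigroup $I$ of $S$ (non-empty with $II\subseteq I$) is an interior ideal if $SIS\subseteq I$; it is proper if $I\neq S$. An interior ideal $I$ is minimal if the only interior ideal of $S$ contained in $I$ is $I$ itself. *)

(* Defs.v *)
(* an arbitrary (possibly infinite) semigroup given by a carrier
   type T and an associative operation; subsets are predicates T -> Prop,
   set equality is extensional equality of predicates. *)

Definition associative_op {T : Type} (op : T -> T -> T) : Prop :=
  forall x y z, op x (op y z) = op (op x y) z.

Definition subset {T : Type} (A B : T -> Prop) : Prop := forall x, A x -> B x.

Definition set_eq {T : Type} (A B : T -> Prop) : Prop := forall x, A x <-> B x.

Definition subsemigroup {T : Type} (op : T -> T -> T) (I : T -> Prop) : Prop :=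
  (exists x, I x) /\ (forall x y, I x -> I y -> I (op x y)).

Definition interior_ideal {T : Type} (op : T -> T -> T) (I : T -> Prop) : Prop :=
  subsemigroup op I /\ (forall s x t, I x -> I (op (op s x) t)).

Definition proper {T : Type} (I : T -> Prop) : Prop := ~ set_eq I (fun _ => True).

Definition minimal_interior_ideal {T : Type} (op : T -> T -> T) (I : T -> Prop) : Prop :=
  interior_ideal op I /\
  (forall J, interior_ideal op J -> subset J I -> set_eq J I).

(* Main.v *)
Require Import Defs.
From Stdlib Require Import Classical.

Theorem mainTheorem15 (T : Type) (op : T -> T -> T) (Hassoc : associative_op op) :
  (forall I : T -> Prop,
      interior_ideal op I -> proper I -> minimal_interior_ideal op I)
  <->
  (forall I J : T -> Prop,
      interior_ideal op I -> proper I ->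
      interior_ideal op J -> proper J ->
      ~ set_eq I J ->
      forall x, ~ (I x /\ J x)).
Proof.
  split.
  - intros H I J HI PI HJ PJ Hne x [Ix Jx].
    assert (HK : interior_ideal op (fun y => I y /\ J y)).
    { destruct HI as [[_ HI1] HI2]; destruct HJ as [[_ HJ1] HJ2].
      split; [split|].
      - exists x; auto.
      - intros a b [] []; split; auto.
      - intros s a t []; split; auto. }
    destruct (H I HI PI) as [_ MI]. destruct (H J HJ PJ) as [_ MJ].
    assert (E1 := MI _ HK (fun y h => proj1 h)).
    assert (E2 := MJ _ HK (fun y h => proj2 h)).
    apply Hne. intro y. split; intro h.
    + apply E2, E1, h.
    + apply E1, E2, h.
  - intros H I HI PI. split; [exact HI|].
    intros J HJ Hsub.
    destruct (classic (set_eq J I)) as [E|NE]; [exact E|].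
    exfalso.
    assert (PJ : proper J).
    { intro EJ. apply PI. intro y. split; auto. intros _. apply Hsub, EJ. exact Logic.I. }
    destruct HJ as [[[x Jx] HJ1] HJ2] eqn:HJe.
    apply (H J I (conj (conj (ex_intro _ x Jx) HJ1) HJ2) PJ HI PI NE x).
    split; auto.
Qed.
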